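(* Let $c_1\ge\dots\ge c_{m+1}\ge0$ and $d_1\ge\dots\ge d_m\ge0$ be integers. Let $(r_1,r_2,\dots)$ and $(s_1,s_2,\dots)$ be the conjugate partitions of $(c_1,\dots,c_{m+1})$ and $(d_1,\dots,d_m)$, and $r_0=m+1=s_0+1$. Let $g=\max\{i\ge0: r_i>s_i\}$ and $h=\min\{i\ge1: d_i<c_i\}$, with the convention $d_{m+1}=-\infty$. Then $g=c_h$ and $$\sum_{j=1}^{g}(r_j-s_j-1)=\sum_{j=h}^{m}(c_{j+1}-d_j).$$
   Context: The conjugate of a finite nonincreasing sequence $(a_1,\dots,a_n)$ of nonnegative integers is $(\bar a_1,\bar a_2,\dots)$ with $\bar a_k=\#\{i: a_i\ge k\}$ for $k\ge1$. *)

(* Defs.v *)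
From mathcomp Require Import all_boot all_order all_algebra.
Set Implicit Arguments. Unset Strict Implicit. Unset Printing Implicit Defensive.
Import GRing.Theory Num.Theory.

(* A finite sequence (a_1,...,a_n) is encoded as a function a : nat -> nat,
   only the values a 1, ..., a n being relevant (1-based indexing). *)

(* Conjugate: conj_part n a k = #{ i in 1..n : a_i >= k }.
   For k = 0 this is n, matching r_0 = m+1 and s_0 = m. *)
Definition conj_part (n : nat) (a : nat -> nat) (k : nat) : nat :=
  count (fun i => k <= a i) (iota 1 n).

Definition is_gidx (r s : nat -> nat) (g : nat) : Prop :=
  s g < r g /\ (forall i, s i < r i -> i <= g).

(* h is the minimum of { i >= 1 : d_i < c_i } with d_{m+1} = -infinity,
   i.e. i ranges over 1..m+1 and i = m+1 always qualifies. *)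
Definition is_hidx (m : nat) (c d : nat -> nat) (h : nat) : Prop :=
  [/\ 1 <= h <= m.+1, (h = m.+1 \/ d h < c h)
    & forall i, 1 <= i -> i < h -> i <= m /\ c i <= d i].

(* Main.v *)
Require Import Defs.
From mathcomp Require Import all_boot all_order all_algebra zify.
Import GRing.Theory Num.Theory.
Lemma leq_sum_nat' m n (F G : nat -> nat) :
  (forall i, m <= i < n -> F i <= G i) ->
  \sum_(m <= i < n) F i <= \sum_(m <= i < n) G i.
Proof.
move=> H; rewrite big_nat_cond [X in _ <= X]big_nat_cond.
by apply: leq_sum => i /andP[hi _]; exact: H.
Qed.

Lemma conjE n a k : conj_part n a k = \sum_(1 <= i < n.+1) (k <= a i).
Proof.
rewrite /conj_part -sum1_count big_mkcond /index_iota subSS subn0.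
by apply: eq_bigr => i _; case: (k <= a i).
Qed.

Lemma sum_ind_min (x g : nat) : \sum_(1 <= j < g.+1) (j <= x) = minn x g.
Proof.
elim: g => [|g IH]; first by rewrite big_geq // minn0.
rewrite big_nat_recr //= IH; case: (leqP g.+1 x) => H /=; lia.
Qed.

Lemma sum_conj n a g :
  \sum_(1 <= j < g.+1) conj_part n a j = \sum_(1 <= i < n.+1) minn (a i) g.
Proof.
under eq_bigr do rewrite conjE.
rewrite exchange_big_nat /=.
by apply: eq_bigr => i _; rewrite sum_ind_min.
Qed.

Lemma mono n (a : nat -> nat) : (forall i, 1 <= i < n -> a i.+1 <= a i) ->
  forall i j, 1 <= i -> i <= j -> j <= n -> a j <= a i.
Proof.
move=> H i j hi hij; rewrite -(subnKC hij); elim: (j - i) => [|k IH] hk.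
  by rewrite addn0.
apply: leq_trans (IH _); last lia.
rewrite addnS; apply: H; lia.
Qed.
Local Open Scope ring_scope.
Lemma Posz_sum m n (F : nat -> nat) :
  ((\sum_(m <= i < n) F i)%N)%:Z = \sum_(m <= i < n) (F i)%:Z.
Proof. exact: (big_morph Posz PoszD (erefl (Posz 0))). Qed.

Theorem lemma4p4 (m : nat) (c d : nat -> nat)
  (hc : forall i : nat, (1 <= i <= m)%N -> (c i.+1 <= c i)%N)
  (hd : forall i : nat, (1 <= i < m)%N -> (d i.+1 <= d i)%N)
  (g h : nat)
  (hg : is_gidx (conj_part m.+1 c) (conj_part m d) g)
  (hh : is_hidx m c d h) :
  g = c h /\
  \sum_(1 <= j < g.+1)
     ((conj_part m.+1 c j)%:Z - (conj_part m d j)%:Z - 1)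
  = \sum_(h <= j < m.+1) ((c j.+1)%:Z - (d j)%:Z).
Proof.
have monoc := @mono m.+1 c (fun i hi => hc i hi).
have monod := @mono m d hd.
case: hh => /andP[h1 hm] hdc hlt.
have gE : g = c h.
  set k := c h.
  have H1 : (conj_part m d k < conj_part m.+1 c k)%N.
    rewrite !conjE.
    have A : (\sum_(1 <= i < m.+1) (k <= d i) <= h.-1)%N.
      rewrite (@big_cat_nat _ _ _ h) //=; try lia.
      have -> : (\sum_(h <= i < m.+1) (k <= d i) = 0)%N.
        rewrite big_nat_cond big1 // => i /andP[/andP[hi1 hi2] _].
        have hdh : (d h < c h)%N by case: hdc => // E; lia.
        have := monod h i h1 hi1 (ltnSE hi2).
        move=> H; apply/eqP; rewrite eqb0 -ltnNge.
        exact: leq_ltn_trans H hdh.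
      rewrite addn0.
      apply: leq_trans (@leq_sum_nat' _ _ _ (fun=> 1%N) _) _.
        by move=> i _; case: (k <= d i)%N.
      rewrite sum_nat_const_nat; lia.
    have B : (h <= \sum_(1 <= i < m.+2) (k <= c i))%N.
      rewrite (@big_cat_nat _ _ _ h.+1) //=; try lia.
      apply: leq_trans (leq_addr _ _).
      apply: leq_trans (@leq_sum_nat' _ _ (fun=> 1%N) _ _); last first.
        move=> i /andP[hi1 hi2].
        by rewrite (monoc i h hi1 (ltnSE hi2) hm).
      rewrite sum_nat_const_nat; lia.
    lia.
  have H2 : forall k', (k < k')%N -> (conj_part m.+1 c k' <= conj_part m d k')%N.
    move=> k' hk; rewrite !conjE big_nat_recr //=.
    have -> : (k' <= c m.+1)%N = false.
      apply/negbTE; rewrite -ltnNge.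
      exact: leq_ltn_trans (monoc h m.+1 h1 hm (leqnn _)) hk.
    rewrite addn0; apply: leq_sum_nat' => i /andP[hi1 hi2].
    case E: (k' <= c i)%N => //.
    have ih : (i < h)%N.
      rewrite ltnNge; apply/negP => hih.
      have := monoc h i h1 hih (ltnW hi2); lia.
    have [_ cd] := hlt i hi1 ih.
    by rewrite (leq_trans E cd).
  case: hg => hg1 hg2.
  apply/eqP; rewrite eqn_leq hg2 // andbT leqNgt; apply/negP => /H2; lia.
split => //.
rewrite !sumrB sumr_const_nat -!Posz_sum !sum_conj.
rewrite (@big_cat_nat _ _ _ h.+1) //=; try lia.
rewrite (@big_cat_nat _ _ _ h _ _ _ (fun i => minn (d i) g)) //=; try lia.
rewrite (@eq_big_nat _ _ _ 1 h.+1 _ (fun=> g)); last first.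
  move=> i /andP[hi1 hi2]; apply/minn_idPr; rewrite gE; exact: monoc.
rewrite (@eq_big_nat _ _ _ h.+1 m.+2 _ c); last first.
  move=> i /andP[hi1 hi2]; apply/minn_idPl; rewrite gE; apply: monoc; lia.
rewrite (@eq_big_nat _ _ _ 1 h _ (fun=> g)); last first.
  move=> i /andP[hi1 hi2]; have [_ cd] := hlt i hi1 hi2.
  apply/minn_idPr; rewrite gE; apply: leq_trans cd; apply: monoc; lia.
rewrite (@eq_big_nat _ _ _ h m.+1 _ d); last first.
  move=> i /andP[hi1 hi2].
  have hdh : (d h < c h)%N by case: hdc => // E; lia.
  apply/minn_idPl; rewrite gE; apply: ltnW; apply: leq_ltn_trans hdh.
  apply: monod; lia.
rewrite !sum_nat_const_nat big_add1 /= -?Posz_sum.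
set X := (\sum_(h <= i < m.+1) c i.+1)%N.
set Y := (\sum_(h <= i < m.+1) d i)%N.
have -> : ((h.+1 - 1) * g = (h - 1) * g + g)%N.
  by rewrite subn1 /= mulnBl mul1n subnK // leq_pmull.
rewrite subn1 /= natz; lia.
Qed.
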